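(* For formulas $S_1,S_2$, the equality $\emptyset[S_1,S_2]=\emptyset[S_2]$ holds if and only if at least one of the following holds: (1) $S_1$ is inconsistent; (2) $S_1$ is tautological; (3) $S_1$ is equivalent to $S_2$; (4) $S_1$ is equivalent to $\neg S_2$.
   Context: Propositional models are truth assignments over a finite set of variables; a formula used where a set of models is expected stands for its set of models. A doxastic state is a sequence $[C(0),\ldots,C(k)]$ of nonempty, pairwise disjoint sets of models covering all models. The flat doxastic state $\emptyset$ is $[\text{all models}]$. Lexicographic revision: $C\,\mathrm{lex}(A) = [C(0)\cap A,\ldots,C(k)\cap A, C(0)\setminus A,\ldots,C(k)\setminus A]$, empty sets discarded. $\emptyset[S_1,\ldots,S_m]$ denotes $\emptyset$ revised lexicographically by $S_1$, then $S_2$, ..., then $S_m$. *)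

(* Defs.v *)
From mathcomp Require Import all_boot.
Set Implicit Arguments. Unset Strict Implicit. Unset Printing Implicit Defensive.

Definition model (n : nat) := {ffun 'I_n -> bool}.

Inductive form (n : nat) : Type :=
| FVar of 'I_n
| FTop : form n
| FBot
| FNeg of form n
| FAnd of form n & form n
| FOr of form n & form n
| FImp of form n & form n.

Fixpoint eval (n : nat) (m : model n) (f : form n) : bool :=
  match f with
  | FVar i => m i
  | FTop => true
  | FBot => false
  | FNeg g => ~~ eval m g
  | FAnd g h => eval m g && eval m h
  | FOr g h => eval m g || eval m h
  | FImp g h => eval m g ==> eval m h
  end.

Definition mods (n : nat) (f : form n) : {set model n} := [set m | eval m f].

Definition inconsistent (n : nat) (f : form n) : Prop := mods f = set0.
Definition tautological (n : nat) (f : form n) : Prop := mods f = setT.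
Definition equivalent (n : nat) (f g : form n) : Prop := mods f = mods g.

(* Doxastic state: sequence [C(0),...,C(k)] of sets of models *)
Definition dstate (n : nat) := seq {set model n}.

Definition flat (n : nat) : dstate n := [:: [set: model n]].

Definition lex (n : nat) (C : dstate n) (A : {set model n}) : dstate n :=
  [seq X <- [seq Y :&: A | Y <- C] ++ [seq Y :\: A | Y <- C] | X != set0].

Definition revise (n : nat) (C : dstate n) (Ss : seq (form n)) : dstate n :=
  foldl (fun D S => lex D (mods S)) C Ss.

(* Main.v *)
Require Import Defs.
From mathcomp Require Import all_boot.
Set Implicit Arguments.

Section S.
Variable n : nat.
Implicit Types A B X : {set model n}.

Lemma setT_neq0 : [set: model n] != set0.
Proof. by apply/set0Pn; exists [ffun=> false]; rewrite inE. Qed.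

Lemma lex_flat A : lex (flat n) A = [seq X <- [:: A; ~: A] | X != set0].
Proof. by rewrite /lex /flat /= setTI setTD. Qed.

Lemma in_rhs X B : X != set0 -> X \subset B ->
  X \in [seq Y <- [:: B; ~: B] | Y != set0] -> X = B.
Proof.
move=> X0 XB; rewrite mem_filter X0 /= !inE => /orP [/eqP //| /eqP E].
case/set0Pn: X0 => x xX; move/subsetP: XB => /(_ x xX).
by move: xX; rewrite E inE => /negPf ->.
Qed.

Lemma in_rhsC X B : X != set0 -> X \subset ~: B ->
  X \in [seq Y <- [:: B; ~: B] | Y != set0] -> X = ~: B.
Proof.
move=> X0 XB; rewrite mem_filter X0 /= !inE => /orP [/eqP E| /eqP //].
case/set0Pn: X0 => x xX; move/subsetP: XB => /(_ x xX).
by move: xX; rewrite E inE => ->.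
Qed.

Lemma key A B :
  lex (lex (flat n) A) B = lex (flat n) B <->
  (A = set0 \/ A = setT \/ A = B \/ A = ~: B).
Proof.
rewrite !lex_flat.
have [A0|A0] := eqVneq A set0.
  by subst; split=> [_|_]; [by left | rewrite setC0 /= eqxx (negPf setT_neq0) /=; exact: lex_flat].
have [AT|AT] := eqVneq A setT.
  by subst; split=> [_|_]; [by right; left | rewrite setCT /= eqxx (negPf setT_neq0) /=; exact: lex_flat].
have AC0 : ~: A != set0.
  by apply: contra AT => /eqP h; apply/eqP; rewrite -[A]setCK h setC0.
set R := [seq Y <- [:: B; ~: B] | Y != set0].
have -> : lex [seq X <- [:: A; ~: A] | X != set0] B =
  [seq X <- [:: A :&: B; ~: A :&: B; A :\: B; ~: A :\: B] | X != set0].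
  by rewrite /= A0 AC0.
split=> [H|].
  have mem X : X \in [:: A :&: B; ~: A :&: B; A :\: B; ~: A :\: B] -> X != set0 ->
      X \in R.
    by move=> Xin X0; rewrite -H mem_filter X0.
  have c1 : A :&: B = set0 \/ ~: A :&: B = set0.
    case: (eqVneq (A :&: B) set0) => [->|h1]; first by left.
    case: (eqVneq (~: A :&: B) set0) => [->|h2]; first by right.
    have e1 := in_rhs h1 (subsetIr _ _) (mem (A :&: B) ltac:(by rewrite !inE eqxx) h1).
    have e2 := in_rhs h2 (subsetIr _ _) (mem (~: A :&: B) ltac:(by rewrite !inE eqxx !orbT) h2).
    exfalso; case/set0Pn: h1 => x xAB; move: (xAB); rewrite {1}e1 -e2 !inE.
    by move: xAB; rewrite !inE; case: (x \in A); case: (x \in B).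
  have c2 : A :\: B = set0 \/ ~: A :\: B = set0.
    case: (eqVneq (A :\: B) set0) => [->|h1]; first by left.
    case: (eqVneq (~: A :\: B) set0) => [->|h2]; first by right.
    have e1 := in_rhsC h1 ltac:(by rewrite setDE; apply: subsetIr) (mem (A :\: B) ltac:(by rewrite !inE eqxx !orbT) h1).
    have e2 := in_rhsC h2 ltac:(by rewrite setDE; apply: subsetIr) (mem (~: A :\: B) ltac:(by rewrite !inE eqxx !orbT) h2).
    exfalso; case/set0Pn: h1 => x xAB; move: (xAB); rewrite {1}e1 -e2 !inE.
    by move: xAB; rewrite !inE; case: (x \in A); case: (x \in B).
  case: c1 => /setP E1; case: c2 => /setP E2.
  - left; apply/setP => x; move: (E1 x) (E2 x); rewrite !inE.
    by case: (x \in A); case: (x \in B).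
  - do 2 right; right; apply/setP => x; move: (E1 x) (E2 x); rewrite !inE.
    by case: (x \in A); case: (x \in B).
  - do 2 right; left; apply/setP => x; move: (E1 x) (E2 x); rewrite !inE.
    by case: (x \in A); case: (x \in B).
  - right; left; apply/setP => x; move: (E1 x) (E2 x); rewrite !inE.
    by case: (x \in A); case: (x \in B).
case=> [/eqP|[/eqP|[E|E]]]; rewrite ?(negPf A0) ?(negPf AT) // {}E.
  have e1 : ~: B :&: B = set0 by apply/setP=> x; rewrite !inE; case: (x \in B).
  have e2 : B :\: B = set0 by apply/setP=> x; rewrite !inE; case: (x \in B).
  have e3 : ~: B :\: B = ~: B by apply/setP=> x; rewrite !inE; case: (x \in B).
  by rewrite setIid e1 e2 e3 /R /= eqxx.
have e1 : ~: ~: B :&: B = B by apply/setP=> x; rewrite !inE; case: (x \in B).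
have e2 : ~: B :&: B = set0 by apply/setP=> x; rewrite !inE; case: (x \in B).
have e3 : ~: B :\: B = ~: B by apply/setP=> x; rewrite !inE; case: (x \in B).
have e4 : ~: ~: B :\: B = set0 by apply/setP=> x; rewrite !inE; case: (x \in B).
by rewrite e1 e2 e3 e4 /R /= eqxx.
Qed.

End S.

Lemma modsN n (S : form n) : mods (FNeg S) = ~: mods S.
Proof. by apply/setP => x; rewrite !inE. Qed.

Theorem mainTheorem8 (n : nat) (S1 S2 : form n) :
  revise (flat n) [:: S1; S2] = revise (flat n) [:: S2] <->
  (inconsistent S1 \/ tautological S1 \/ equivalent S1 S2 \/
   equivalent S1 (FNeg S2)).
Proof.
rewrite /revise /= /inconsistent /tautological /equivalent modsN.
exact: key.
Qed.
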